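(* Let $T$ be a strongly connected tournament on $n$ vertices which has an edge $e$ from $u$ to $v$ such that every directed cycle of $T$ contains $e$. Then the vertices of $T$ can be labeled $v_1,\ldots,v_n$ so that $T=D_n$, $u=v_n$ and $v=v_1$, where $D_n$ is the tournament in which, for $1\le i<j\le n$ with $(i,j)\ne(1,n)$, the edge between $v_i$ and $v_j$ is directed from $v_i$ to $v_j$, and the edge between $v_1$ and $v_n$ is directed from $v_n$ to $v_1$.
   Context: A tournament is an orientation of a complete graph; it is strongly connected if for any two vertices there is a directed path from each to the other. *)

(* Defs.v *)
From mathcomp Require Import all_boot.
Set Implicit Arguments. Unset Strict Implicit. Unset Printing Implicit Defensive.

Definition tournament (T : finType) (E : rel T) : Prop :=
  (forall x, ~~ E x x) /\
  (forall x y, x != y -> E x y (+) E y x).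

Definition strongly_connected (T : finType) (E : rel T) : Prop :=
  forall x y, connect E x y.

Definition directed_cycle (T : finType) (E : rel T) (c : seq T) : Prop :=
  [/\ c != [::], uniq c & cycle E c].

Definition cycle_uses_edge (T : finType) (c : seq T) (u v : T) : Prop :=
  (u \in c) /\ next c u = v.

(* The tournament D_n, with vertices indexed 0..n-1 (v_{i+1} <-> index i):
   i -> j iff (i < j and (i,j) <> (0,n-1)), or (i,j) = (n-1,0). *)
Definition Dn (n i j : nat) : bool :=
  ((i < j) && ~~ ((i == 0) && (j == n.-1))) || ((i == n.-1) && (j == 0)).

(* Main.v *)
Require Import Defs.
From mathcomp Require Import all_boot.
From mathcomp Require Import zify.
Set Implicit Arguments. Unset Strict Implicit. Unset Printing Implicit Defensive.

Definition Ep (T : finType) (E : rel T) (u v : T) : rel T :=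
  fun x y => E x y && ~~ ((x == u) && (y == v)).

Lemma closure_fw (T : finType) (E : rel T) (P : pred T) x y :
  connect E x y -> P x -> (forall s b, P s -> E s b -> P b) -> P y.
Proof.
move=> /connectP [p pth ->] Px Hc.
elim: p x pth Px => [|z p IH] x //= /andP [exz pz] Px.
exact: IH pz (Hc _ _ Px exz).
Qed.

Lemma closure_bw (T : finType) (E : rel T) (P : pred T) x y :
  connect E x y -> P y -> (forall s b, P b -> E s b -> P s) -> P x.
Proof.
move=> cxy Py Hc; apply/negPn/negP => nPx.
have := @closure_fw _ _ (predC P) _ _ cxy nPx.
rewrite /= Py => H; have //: false; apply: H => s b /= nPs esb; apply/negP => Pb; by rewrite (Hc _ _ Pb esb) in nPs.
Qed.

Lemma noback (T : finType) (E : rel T) (u v : T) x y :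
  (forall x, ~~ E x x) ->
  (forall c : seq T, directed_cycle E c -> cycle_uses_edge c u v) ->
  Ep E u v x y -> connect (Ep E u v) y x -> False.
Proof.
move=> Hirr Hcyc exy /connectP [p pth lst].
case: (shortenP pth) lst => q qpth quniq _ lst.
have xy : x != y.
  apply/eqP => exy'; move: exy; rewrite exy' /Ep; by rewrite (negbTE (Hirr y)).
move: q qpth quniq lst; case/lastP => [|q' z] qpth quniq lst.
  by rewrite /= lst eqxx in xy.
rewrite last_rcons in lst; subst z.
set c := x :: y :: q'.
have cc : cycle (Ep E u v) c.
  by rewrite /c /= rcons_path exy /= -rcons_path.
have uc : uniq c.
  by move: quniq; rewrite -rcons_cons rcons_uniq.
have [uin nx] : cycle_uses_edge c u v.
  apply: Hcyc; split => //; apply: sub_cycle cc => a b /andP [].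
  by [].
have := next_cycle cc uin; rewrite nx /Ep !eqxx andbF //.
Qed.

Lemma acyc (T : finType) (E : rel T) (u v : T) x y :
  (forall x, ~~ E x x) ->
  (forall c : seq T, directed_cycle E c -> cycle_uses_edge c u v) ->
  connect (Ep E u v) x y -> connect (Ep E u v) y x -> x = y.
Proof.
move=> Hirr Hcyc /connectP [[|z p] /= pth ->] // cyx.
case/andP: pth => exz pz.
exfalso; apply: (noback Hirr Hcyc exz).
apply: connect_trans _ cyx; apply/connectP; by exists p.
Qed.

Lemma vmin (T : finType) (E : rel T) (u v : T) w :
  strongly_connected E -> connect (Ep E u v) v w.
Proof.
move=> Hsc; apply: (@closure_fw _ E (fun w => connect (Ep E u v) v w) v w (Hsc v w)).
  exact: connect0.
move=> s b /= cs esb.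
case: (boolP ((s == u) && (b == v))) => [/andP [_ /eqP ->]|h]; first exact: connect0.
apply: connect_trans cs _; apply: connect1; by rewrite /Ep esb h.
Qed.

Lemma umax (T : finType) (E : rel T) (u v : T) w :
  strongly_connected E -> connect (Ep E u v) w u.
Proof.
move=> Hsc; apply: (@closure_bw _ E (fun w => connect (Ep E u v) w u) w u (Hsc w u)).
  exact: connect0.
move=> s b /= cs esb.
case: (boolP ((s == u) && (b == v))) => [/andP [/eqP -> _]|h]; first exact: connect0.
apply: connect_trans _ cs; apply: connect1; by rewrite /Ep esb h.
Qed.

Theorem mainTheorem11 (T : finType) (E : rel T) (n : nat) (u v : T) :
  #|T| = n ->
  tournament E ->
  strongly_connected E ->
  E u v ->
  (forall c : seq T, directed_cycle E c -> cycle_uses_edge c u v) ->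
  exists f : 'I_n -> T,
    [/\ bijective f,
        (forall i j : 'I_n, E (f i) (f j) = Dn n i j),
        (forall i : 'I_n, val i = n.-1 -> f i = u)
      & (forall i : 'I_n, val i = 0 -> f i = v)].
Proof.
move=> cardT [Hirr Htour] Hsc euv Hcyc.
set R := Ep E u v.
have uv : u != v by apply/eqP => e; move: euv; rewrite e (negbTE (Hirr v)).
set A := fun x => [set y | connect R y x].
have Ain x : x \in A x by rewrite inE connect0.
have Apos x : 0 < #|A x| by apply/card_gt0P; exists x.
have Ale x : #|A x| <= n by rewrite -cardT max_card.
have ltg x : #|A x|.-1 < n by have := Apos x; have := Ale x; lia.
have strict x y : connect R x y -> x != y -> #|A x| < #|A y|.
  move=> cxy nxy; apply: proper_card; apply/properP; split.
    apply/subsetP => z; rewrite !inE => czx; exact: connect_trans czx cxy.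
  exists y => //; rewrite inE; apply/negP => cyx.
  by rewrite (acyc Hirr Hcyc cxy cyx) eqxx in nxy.
have total x y : x != y -> connect R x y || connect R y x.
  move=> nxy; have := Htour x y nxy.
  case exy: (E x y) => /=.
    case: (boolP ((x == u) && (y == v))) => [/andP [/eqP -> /eqP ->]|h].
      by rewrite (vmin u v u Hsc) orbT.
    by rewrite connect1 // /R /Ep exy h.
  move=> eyx.
  case: (boolP ((y == u) && (x == v))) => [/andP [/eqP -> /eqP ->]|h].
    by rewrite (vmin u v u Hsc).
  by rewrite orbC connect1 // /R /Ep eyx h.
have glt x y : x != y -> (#|A x| < #|A y|) = connect R x y.
  move=> nxy; case cxy: (connect R x y); first exact: strict.
  have := total x y nxy; rewrite cxy /= => cyx.
  have := strict y x cyx; rewrite eq_sym nxy => /(_ isT); lia.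
pose g x : 'I_n := Ordinal (ltg x).
have gval x : (g x : nat) = #|A x|.-1 by [].
clearbody g.
have ginj : injective g.
  move=> x y /(congr1 val) /=; rewrite !gval => e; apply/eqP/negPn/negP => nxy.
  have ex : #|A x| = #|A y| by have := Apos x; have := Apos y; lia.
  have := total x y nxy; case/orP => c.
    by have := strict x y c nxy; rewrite ex ltnn.
  by have := strict y x c; rewrite eq_sym nxy ex ltnn => /(_ isT).
have gbij : bijective g by apply: (inj_card_bij ginj); rewrite card_ord cardT.
case: gbij => f gK fK.
have gv : nat_of_ord (g v) = 0.
  rewrite gval; suff -> : A v = [set v] by rewrite cards1.
  apply/setP => y; rewrite !inE; apply/idP/eqP => [c|->]; last exact: connect0.
  exact: acyc Hirr Hcyc c (vmin u v y Hsc).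
have gu : nat_of_ord (g u) = n.-1.
  rewrite gval; suff -> : A u = setT by rewrite cardsT cardT.
  apply/setP => y; rewrite !inE; exact: umax.
have n1 : n.-1 != 0.
  apply/negP => /eqP h; have : g u = g v by apply: val_inj => /=; rewrite gv gu h.
  by move/ginj/eqP; rewrite (negbTE uv).
exists f; split.
- by exists g.
- move=> i j; rewrite -{2}[i]fK -{2}[j]fK.
  move: (f i) (f j) => x y.
  have eqv x' : (nat_of_ord (g x') == 0) = (x' == v).
    apply/eqP/eqP => [h|->//]; apply: ginj; apply: val_inj => /=; by rewrite h gv.
  have equ x' : (nat_of_ord (g x') == n.-1) = (x' == u).
    apply/eqP/eqP => [h|->//]; apply: ginj; apply: val_inj => /=; by rewrite h gu.
  rewrite /Dn.
  case: (eqVneq x y) => [<-|nxy].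
    rewrite (negbTE (Hirr x)) ltnn /=.
    by apply/esym/negP => /andP [/eqP h1 /eqP h2]; move: n1; rewrite -h1 h2.
  have gxy : nat_of_ord (g x) != nat_of_ord (g y).
    by apply/negP => /eqP h; move: nxy; rewrite (ginj x y (val_inj h)) eqxx.
  have Ht := Htour x y nxy.
  have lt_eq : (nat_of_ord (g x) < nat_of_ord (g y)) = connect R x y.
    rewrite !gval -glt //; have := Apos x; have := Apos y; lia.
  case: (ltngtP (nat_of_ord (g x)) (nat_of_ord (g y))) => [lxy|lyx|e]; last by rewrite e eqxx in gxy.
  + have -> : (g y == 0 :> nat) = false by apply/eqP; lia.
    rewrite andbF orbF /= eqv equ.
    have nR : ~~ R y x.
      apply/negP => ryx; rewrite lt_eq in lxy; exact: noback Hirr Hcyc ryx lxy.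
    have key : E y x = (y == u) && (x == v).
      apply/idP/idP => [eyx|/andP [/eqP -> /eqP ->] //].
      by move: nR; rewrite /R /Ep eyx /= negbK.
    move/addbP: Ht => Ht; by rewrite andbC -key -Ht negbK.
  + have lyx' : ~~ (nat_of_ord (g x) < nat_of_ord (g y)) by rewrite -leqNgt ltnW.
    rewrite /= eqv equ.
    have cyx : connect R y x by rewrite -glt 1?eq_sym //; have := Apos x; have := Apos y; rewrite !gval in lyx; lia.
    have nR : ~~ R x y.
      apply/negP => rxy; exact: noback Hirr Hcyc rxy cyx.
    apply/idP/idP => [exy|/andP [/eqP -> /eqP ->] //].
    by move: nR; rewrite /R /Ep exy /= negbK.
- move=> i hi; apply: ginj; rewrite fK; apply: val_inj => /=; by rewrite hi gu.
- move=> i hi; apply: ginj; rewrite fK; apply: val_inj => /=; by rewrite hi gv.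
Qed.
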